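(* Let $a,b\in GF(q)\setminus\{0\}$ and let $\mu\in GF(q)$ satisfy $\mu^2=\frac ba\neq1$. Let $\mathcal B^1_{(s,c)}\in\tau(a,b)$ and let $P$ be the point of $\mathcal B_a\cap\mathcal B^1_{(s,c)}$. Then the unique point of $\mathcal B_b\cap\mathcal B^1_{(s,c)}$ is either $\mu P$ or $-\mu P$.
   Context: Let $p$ be an odd prime, $m\ge1$, and $q=p^m$. $GF(q^2)$ denotes the quadratic extension of $GF(q)$, and for $z\in GF(q^2)$ we write $\bar z:=z^{q}$. The Miquelian Möbius plane $\mathbb M(q)$ has point set $GF(q^2)\cup\{\infty\}$ and circles of two types: for $s\in GF(q^2)$ and $c\in GF(q)\setminus\{0\}$, the circle of the first type $\mathcal B^1_{(s,c)}=\{z\in GF(q^2):(z-s)(\bar z-\bar s)=c\}$; for $s\in GF(q^2)\setminus\{0\}$ and $c\in GF(q)$, the circle of the second type $\mathcal B^2_{(s,c)}=\{z\in GF(q^2):\bar s z+s\bar z=c\}\cup\{\infty\}$. Two circles are called tangential if they have exactly one point in common. For $a\in GF(q)\setminus\{0\}$ put $\mathcal B_a:=\mathcal B^1_{(0,a)}$, and for $a,b\in GF(q)\setminus\{0\}$ let $\tau(a,b)$ be the set of circles tangential to both $\mathcal B_a$ and $\mathcal B_b$. *)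

(* Defs.v *)
From HB Require Import structures.
From mathcomp Require Import all_boot all_order all_algebra all_field.
Set Implicit Arguments. Unset Strict Implicit. Unset Printing Implicit Defensive.
Import GRing.Theory.
Local Open Scope ring_scope.

(* L plays the role of GF(q^2); q is passed explicitly.
   Points of the Miquelian Moebius plane M(q): option L, with None = infinity. *)

Definition conjq (L : finFieldType) (q : nat) (z : L) : L := z ^+ q.

Definition GFq (L : finFieldType) (q : nat) : {set L} :=
  [set x : L | x ^+ q == x].

Definition circle1 (L : finFieldType) (q : nat) (s c : L) : {set option L} :=
  [set x : option L | if x is Some z
                      then (z - s) * (conjq q z - conjq q s) == c
                      else false].

Definition circle2 (L : finFieldType) (q : nat) (s c : L) : {set option L} :=
  [set x : option L | if x is Some z
                      then conjq q s * z + s * conjq q z == c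
                      else true].

Definition circles (L : finFieldType) (q : nat) : {set {set option L}} :=
  [set C : {set option L} |
     [exists s : L, exists c : L,
        ((c \in @GFq L q) && (c != 0) && (C == @circle1 L q s c))
     || ((s != 0) && (c \in @GFq L q) && (C == @circle2 L q s c))]].

Definition tangential (L : finFieldType) (C D : {set option L}) : bool :=
  #|C :&: D| == 1%N.

Definition Bcirc (L : finFieldType) (q : nat) (a : L) : {set option L} :=
  circle1 q 0 a.

Definition tau (L : finFieldType) (q : nat) (a b : L) : {set {set option L}} :=
  [set C in @circles L q | tangential C (Bcirc q a) && tangential C (Bcirc q b)].

(* Main.v *)
Require Import Defs.
From HB Require Import structures.
From mathcomp Require Import all_boot all_order all_algebra all_field.
From mathcomp Require Import ring.
Import GRing.Theory.
Local Open Scope ring_scope.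

Section Aux.
Variables (L : finFieldType) (q : nat).
Hypothesis hL : #|L| = (q ^ 2)%N.

Lemma cjM (x y : L) : conjq q (x * y) = conjq q x * conjq q y.
Proof. by rewrite /conjq exprMn. Qed.
Lemma cjV (x : L) : conjq q (x^-1) = (conjq q x)^-1.
Proof. by rewrite /conjq exprVn. Qed.
Lemma cjK (x : L) : conjq q (conjq q x) = x.
Proof. by rewrite /conjq -exprM mulnn -hL expf_card. Qed.
Lemma q_gt0 : (0 < q)%N.
Proof.
have : (0 < #|L|)%N by apply/card_gt0P; exists (0 : L).
by rewrite hL; case: (q).
Qed.

Lemma cj_eq0 (x : L) : (conjq q x == 0) = (x == 0).
Proof. by rewrite /conjq expf_eq0 q_gt0. Qed.

Lemma card1_eq (A : {set option L}) x y :
  #|A| = 1%N -> x \in A -> y \in A -> x = y.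
Proof.
move/eqP/cards1P => [z ->]; rewrite !inE => /eqP -> /eqP -> //.
Qed.

Lemma key (s c a z : L) : s != 0 -> #|@Bcirc L q a :&: @circle1 L q s c| = 1%N ->
  Some z \in @Bcirc L q a :&: @circle1 L q s c ->
  z = s * conjq q z / conjq q s.
Proof.
move=> s0 h1 hz.
have cs0 : s ^+ q != 0 by have := cj_eq0 s; rewrite /conjq => ->.
have e0 : 0 ^+ q = 0 :> L by rewrite expr0n gtn_eqF ?q_gt0.
have hz' : Some (s * conjq q z / conjq q s) \in @Bcirc L q a :&: @circle1 L q s c.
  move: hz; rewrite !inE /= !cjM cjV !cjK /conjq e0.
  move=> /andP[/eqP h1' /eqP h2]; apply/andP; split; apply/eqP.
    rewrite -h1'; field; by rewrite cs0 s0.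
  rewrite -h2; field; by rewrite cs0 s0.
have := card1_eq _ _ _ h1 hz hz'; by case.
Qed.
End Aux.

Theorem mainTheorem4 (L : finFieldType) (p m q : nat)
  (hp : prime p) (hodd : odd p) (hm : (0 < m)%N) (hq : q = (p ^ m)%N)
  (hL : #|L| = (q ^ 2)%N)
  (a b mu s c P : L)
  (ha : a \in @GFq L q) (ha0 : a != 0)
  (hb : b \in @GFq L q) (hb0 : b != 0)
  (hmu : mu \in @GFq L q)
  (hmu2 : mu ^+ 2 = b / a) (hba : b / a != 1)
  (hc : c \in @GFq L q) (hc0 : c != 0)
  (htau : @circle1 L q s c \in @tau L q a b)
  (hP : Some P \in @Bcirc L q a :&: @circle1 L q s c) :
  @Bcirc L q b :&: @circle1 L q s c = [set Some (mu * P)]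
  \/ @Bcirc L q b :&: @circle1 L q s c = [set Some (- (mu * P))].
Proof.
have e0 : 0 ^+ q = 0 :> L by rewrite expr0n gtn_eqF ?(@q_gt0 L q hL).
move: htau; rewrite inE => /andP[_ /andP[/eqP ta /eqP tb]].
rewrite setIC in ta; rewrite setIC in tb.
have [x hx] : exists x, @Bcirc L q b :&: @circle1 L q s c = [set x].
  by apply/cards1P/eqP.
have hxin : x \in @Bcirc L q b :&: @circle1 L q s c by rewrite hx set11.
case: x hx hxin => [Q|] hx hxin; last by move: hxin; rewrite !inE andbF.
rewrite hx.
have [s0|s0] := eqVneq s 0.
  exfalso; move: hP hxin; rewrite s0 !inE /conjq /= e0 !subr0.
  move=> /andP[/eqP h1 /eqP h2] /andP[/eqP h3 /eqP h4].
  by move: hba; rewrite -h3 h4 -h2 h1 divff // eqxx.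
have hPk := @key L q hL s c a P s0 ta hP.
have hQk := @key L q hL s c b Q s0 tb hxin.
have cs0 : s ^+ q != 0 by have := @cj_eq0 L q hL s; rewrite /conjq => ->.
move: hP hxin hPk hQk; rewrite !inE /conjq /= e0 !subr0.
set P' := P ^+ q; set Q' := Q ^+ q; set S := s ^+ q.
move=> /andP[/eqP hPa _] /andP[/eqP hQb _] hPk hQk.
have Pn0 : P != 0 by apply: contraNneq ha0 => PP; rewrite -hPa PP mul0r.
have P1n0 : P' != 0 by apply: contraNneq ha0 => PP; rewrite -hPa PP mulr0.
have eP' : P' = S * P / s by rewrite {1}hPk; field; rewrite cs0 s0.
have eQ' : Q' = S * Q / s by rewrite {1}hQk; field; rewrite cs0 s0.
have hl : (Q / P) ^+ 2 = mu ^+ 2.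
  rewrite hmu2 -hQb -hPa eP' eQ'; field; by rewrite Pn0 s0 cs0.
have : (Q / P - mu) * (Q / P + mu) == 0.
  by rewrite -subr_sqr hl subrr.
rewrite mulf_eq0 subr_eq0 addr_eq0 => /orP[] /eqP h.
  by left; rewrite -h divfK.
by right; rewrite -mulNr -h divfK.
Qed.
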